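(* Let $L$ denote the problem of finding both the largest and the smallest of $n$ elements by pairwise comparisons. Then for every integer $k\ge 0$, $D_k(L,n)=\min\{n+k-1,\ \lceil 3n/2\rceil-2\}$.
   Context: Problem $L$ on $n$ elements: the input is an assignment of $n$ distinct real numbers $a_1,\dots,a_n$ to $n$ labeled elements; a query is a pair $\{i,j\}$ and its answer tells whether $a_i<a_j$; the goal is to determine which element is the largest and which is the smallest. $D_k(L,n)$ is defined by the following game between a Questioner and an Adversary. The Adversary chooses an input (the current input). The Questioner, who always knows the current input, asks queries one after another; each query is answered according to the current input. Between queries the Adversary may replace the current input by any other input consistent with all answers given so far, but at most $k$ times in total. The game ends as soon as the answers given determine both the largest and the smallest element. $D_k(L,n)$ is the number of queries asked when the Questioner minimizes and the Adversary maximizes this number. *)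

(* Defs.v *)
From mathcomp Require Import all_boot all_fingroup.
Set Implicit Arguments. Unset Strict Implicit. Unset Printing Implicit Defensive.

(* Only the relative order matters for the game, so we take the
   distinct numbers to be 0,...,n-1, i.e. an input is a permutation a,
   element i receiving the value a i. *)
Definition input (n : nat) := {perm 'I_n}.

Definition query (n : nat) := ('I_n * 'I_n)%type.
Definition answer n (a : input n) (q : query n) : bool := (a q.1 < a q.2)%N.

Definition history (n : nat) := seq (query n * bool).

Definition consistent n (a : input n) (h : history n) : bool :=
  all (fun t => answer a t.1 == t.2) h.

Definition determined n (h : history n) : Prop :=
  exists i j : 'I_n, forall b : input n, consistent b h ->
    (forall x, (b x <= b i)%N) /\ (forall x, (b j <= b x)%N).

Definition adv_move n (a : input n) (c : nat) (h : history n)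
  (a' : input n) (c' : nat) : Prop :=
  (a' = a /\ c' = c) \/ (c = c'.+1 /\ consistent a' h).

(* questioner_wins m h a c : from the position with answered history h,
   current input a and c remaining changes, the Questioner (who knows the
   current input) can force the game to end after at most m more queries. *)
Fixpoint questioner_wins n (m : nat) (h : history n) (a : input n) (c : nat)
  : Prop :=
  match m with
  | 0 => determined h
  | m'.+1 => determined h \/
      exists q : query n, q.1 != q.2 /\
        let h' := (q, answer a q) :: h in
        forall a' c', adv_move a c h' a' c' -> questioner_wins m' h' a' c'
  end.

Definition D_value (k n v : nat) : Prop :=
  (forall a : input n, questioner_wins v [::] a k) /\
  (forall m, (forall a : input n, questioner_wins m [::] a k) -> (v <= m)%N).

(* Main.v *)
Require Import Defs.
From mathcomp Require Import all_boot all_fingroup.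
From mathcomp Require Import zify.
Set Implicit Arguments. Unset Strict Implicit. Unset Printing Implicit Defensive.

Definition loser n (t : query n * bool) : 'I_n := if t.2 then t.1.1 else t.1.2.
Definition winner n (t : query n * bool) : 'I_n := if t.2 then t.1.2 else t.1.1.
Definition wf n (h : history n) : bool := all (fun t => t.1.1 != t.1.2) h.
Definition lost n (h : history n) (z : 'I_n) : bool := has (fun t => loser t == z) h.
Definition won n (h : history n) (z : 'I_n) : bool := has (fun t => winner t == z) h.
Definition NL n (h : history n) : {set 'I_n} := [set z | ~~ lost h z].
Definition NW n (h : history n) : {set 'I_n} := [set z | ~~ won h z].
Definition UU n (h : history n) : nat := #|NL h| + #|NW h| - 2.
Definition SS n (h : history n) : nat := #|NL h :&: NW h|.

Lemma NL_cons n (t : query n * bool) h : NL (t :: h) = NL h :\ loser t.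
Proof. by apply/setP => z; rewrite !inE /lost /= negb_or eq_sym. Qed.
Lemma NW_cons n (t : query n * bool) h : NW (t :: h) = NW h :\ winner t.
Proof. by apply/setP => z; rewrite !inE /won /= negb_or eq_sym. Qed.

Lemma cons_lw n (b : input n) (t : query n * bool) :
  t.1.1 != t.1.2 -> answer b t.1 == t.2 -> (b (loser t) < b (winner t))%N.
Proof.
case: t => [[i j] bb] /= ne; rewrite /answer /loser /winner /=.
case: bb => /eqP => [//|].
move/negbT; rewrite -leqNgt leq_eqVlt => /orP [|//].
by move/eqP/val_inj/perm_inj => E; rewrite E eqxx in ne.
Qed.

Lemma consistent_lw n (b : input n) h t : wf h -> consistent b h -> t \in h ->
  (b (loser t) < b (winner t))%N.
Proof.
move=> /allP W /allP C th; apply: cons_lw; [exact: W | exact: C].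
Qed.

Lemma lost_lt n (b : input n) h z : wf h -> consistent b h -> lost h z ->
  exists w, (b z < b w)%N.
Proof.
move=> W C /hasP [t th /eqP <-]; exists (winner t); exact: consistent_lw th.
Qed.
Lemma won_lt n (b : input n) h z : wf h -> consistent b h -> won h z ->
  exists w, (b w < b z)%N.
Proof.
move=> W C /hasP [t th /eqP <-]; exists (loser t); exact: consistent_lw th.
Qed.

Definition rk n (key : 'I_n -> nat) (x : 'I_n) := #|[set y | key y < key x]|.

Lemma rk_lt n (key : 'I_n -> nat) x : rk key x < n.
Proof.
rewrite /rk -[X in _ < X]card_ord -cardsT.
apply: proper_card; apply/properP; split; first exact: subsetT.
by exists x; rewrite ?inE ?ltnn.
Qed.

Lemma rk_mono n (key : 'I_n -> nat) x y : key x < key y -> rk key x < rk key y.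
Proof.
move=> lt; apply: proper_card; apply/properP; split.
  by apply/subsetP => z; rewrite !inE => /ltn_trans; apply.
by exists x; rewrite !inE ?ltnn.
Qed.

Lemma perm_of_key n (key : 'I_n -> nat) : injective key ->
  exists p : input n, forall x y, (p x < p y) = (key x < key y).
Proof.
move=> ik.
pose f := fun x => Ordinal (rk_lt key x).
have fm : forall x y, (f x < f y) = (key x < key y).
  move=> x y; apply/idP/idP; last exact: rk_mono.
  rewrite /= => H; case: (ltngtP (key x) (key y)) => // [H2|H2].
    by have := rk_mono H2; rewrite ltnNge (ltnW H).
  by have := ik _ _ H2 => E; rewrite E ltnn in H.
have fi : injective f.
  move=> x y E; apply: ik; case: (ltngtP (key x) (key y)) => // H.
    by have := fm x y; rewrite H E ltnn.
  by have := fm y x; rewrite H E ltnn.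
exists (perm fi) => x y; rewrite !permE; exact: fm.
Qed.

Lemma predn_lt n (hn : 0 < n) : n.-1 < n. Proof. by rewrite ltn_predL. Qed.

Definition topv n (hn : 0 < n) : 'I_n := Ordinal (predn_lt hn).
Definition botv n (hn : 0 < n) : 'I_n := Ordinal hn.

Definition tb n (hn : 0 < n) (b : input n) := (b^-1)%g (topv hn).
Definition bb n (hn : 0 < n) (b : input n) := (b^-1)%g (botv hn).

Lemma tb_max n (hn : 0 < n) (b : input n) x : b x <= b (tb hn b).
Proof. by rewrite /tb permKV /=; have := ltn_ord (b x); lia. Qed.
Lemma bb_min n (hn : 0 < n) (b : input n) x : b (bb hn b) <= b x.
Proof. by rewrite /bb permKV /=. Qed.

Lemma tb_NL n (hn : 0 < n) (b : input n) h : wf h -> consistent b h -> tb hn b \in NL h.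
Proof.
move=> W C; rewrite inE; apply/negP => /(lost_lt W C) [w].
by have := tb_max hn b w; lia.
Qed.
Lemma bb_NW n (hn : 0 < n) (b : input n) h : wf h -> consistent b h -> bb hn b \in NW h.
Proof.
move=> W C; rewrite inE; apply/negP => /(won_lt W C) [w].
by have := bb_min hn b w; lia.
Qed.

Lemma det_suff n (hn : 0 < n) (a : input n) h : wf h -> consistent a h ->
  #|NL h| <= 1 -> #|NW h| <= 1 -> determined h.
Proof.
move=> W C /card_le1_eqP L1 /card_le1_eqP W1.
exists (tb hn a), (bb hn a) => b Cb; split => x.
  have -> : tb hn a = tb hn b by apply: L1; apply: tb_NL.
  exact: tb_max.
have -> : bb hn a = bb hn b by apply: W1; apply: bb_NW.
exact: bb_min.
Qed.

Lemma lift_top n (a : input n) h x : wf h -> consistent a h -> x \in NL h ->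
  exists b : input n, consistent b h /\ forall y, y != x -> b y < b x.
Proof.
move=> W C xN.
pose key := fun z : 'I_n => if z == x then n else a z.
have ik : injective key.
  move=> u v; rewrite /key; case: (u =P x) => [->|ux]; case: (v =P x) => [->|vx] //.
  - by have := ltn_ord (a v); lia.
  - by have := ltn_ord (a u); lia.
  by move/val_inj/perm_inj.
have [p Hp] := perm_of_key ik.
exists p; split; last by move=> y yx; rewrite Hp /key (negbTE yx) eqxx ltn_ord.
apply/allP => t th; rewrite /answer Hp.
have := allP C t th; have := allP W t th; rewrite /answer.
move: xN; rewrite inE => /hasPn /(_ t th).
case: t th => [[i j] c] th /=; clear th; rewrite /loser /= /key => nl ne.
case: (i =P x) => [ix|ix]; case: (j =P x) => [jx|jx].
- by rewrite ix jx eqxx in ne.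
- case: c nl => /=; first by rewrite ix eqxx.
  by move=> *; apply/eqP/negbTE; rewrite -leqNgt ltnW.
- case: c nl => /=; last by rewrite jx eqxx.
  by rewrite ltn_ord.
- by [].
Qed.

Lemma lift_bot n (a : input n) h x : wf h -> consistent a h -> x \in NW h ->
  exists b : input n, consistent b h /\ forall y, y != x -> b x < b y.
Proof.
move=> W C xN.
pose key := fun z : 'I_n => if z == x then 0 else (a z).+1.
have ik : injective key.
  move=> u v; rewrite /key; case: (u =P x) => [->|ux]; case: (v =P x) => [->|vx] //.
  by move=> [] /val_inj/perm_inj.
have [p Hp] := perm_of_key ik.
exists p; split; last by move=> y yx; rewrite Hp /key (negbTE yx) eqxx.
apply/allP => t th; rewrite /answer Hp.
have := allP C t th; have := allP W t th; rewrite /answer.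
move: xN; rewrite inE => /hasPn /(_ t th).
case: t th => [[i j] c] th /=; clear th; rewrite /winner /= /key => nl ne.
case: (i =P x) => [ix|ix]; case: (j =P x) => [jx|jx].
- by rewrite ix jx eqxx in ne.
- case: c nl => /=; last by rewrite ix eqxx.
  by [].
- case: c nl => /=; first by rewrite jx eqxx.
  by [].
- by [].
Qed.

Lemma det_nec n (a : input n) h : wf h -> consistent a h -> determined h ->
  #|NL h| <= 1 /\ #|NW h| <= 1.
Proof.
move=> W C [i [j D]]; split; apply/card_le1_eqP => x y xN yN.
- have E : forall z, z \in NL h -> z = i.
    move=> z zN; have [b [Cb Hb]] := lift_top W C zN.
    have [D1 _] := D b Cb; apply/eqP; apply/negPn/negP => zi.
    by have := Hb i; rewrite eq_sym zi => /(_ isT); have := D1 z; lia.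
  by rewrite (E x xN) (E y yN).
- have E : forall z, z \in NW h -> z = j.
    move=> z zN; have [b [Cb Hb]] := lift_bot W C zN.
    have [_ D2] := D b Cb; apply/eqP; apply/negPn/negP => zi.
    by have := Hb j; rewrite eq_sym zi => /(_ isT); have := D2 z; lia.
  by rewrite (E x xN) (E y yN).
Qed.

Definition CC n (a : input n) h (th : nat) :=
  #|[set x in NL h | a x < th]| + #|[set y in NW h | th < a y]|.

Lemma UU_det n (a : input n) h : wf h -> consistent a h -> determined h -> UU h = 0.
Proof. by move=> W C D; have [] := det_nec W C D; rewrite /UU; lia. Qed.

Lemma card_D1b (T : finType) (A : {set T}) x : #|A| = (x \in A) + #|A :\ x|.
Proof. exact: cardsD1. Qed.

Lemma step_wf n (q : query n) b h : q.1 != q.2 -> wf h -> wf ((q, b) :: h).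
Proof. by move=> ne W; rewrite /wf /= ne. Qed.
Lemma step_cons n (a : input n) q h : consistent a h -> consistent a ((q, answer a q) :: h).
Proof. by move=> C; rewrite /consistent /= eqxx. Qed.

Lemma L0 n m : forall (h : history n) (a : input n) c th, wf h -> consistent a h ->
  m + CC a h th < UU h -> ~ questioner_wins m h a c.
Proof.
elim: m => [|m IH] h a c th W C lt.
  by move=> /= D; have := UU_det W C D; lia.
move=> /= [D|[q [ne H]]]; first by have := UU_det W C D; lia.
set t := (q, answer a q) in H.
have H' := H a c (or_introl (conj erefl erefl)).
apply: (IH _ _ _ th _ _ _ H'); first exact: step_wf; first exact: step_cons.
have lw : a (loser t) < a (winner t) by apply: cons_lw; rewrite /= ?eqxx.
move: lt; rewrite /UU /CC !NL_cons !NW_cons -/t.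
set x := loser t in lw *; set y := winner t in lw *.
rewrite (card_D1b (NL h) x) (card_D1b (NW h) y).
set S := [set z in NL h | a z < th]; set T := [set z in NW h | th < a z].
have -> : [set z in NL h :\ x | a z < th] = S :\ x.
  by apply/setP => z; rewrite !inE andbA.
have -> : [set z in NW h :\ y | th < a z] = T :\ y.
  by apply/setP => z; rewrite !inE andbA.
rewrite (card_D1b S x) (card_D1b T y).
move: #|S :\ x| #|T :\ y| #|NL h :\ x| #|NW h :\ y| => s1 t1 a1 b1.
rewrite /S /T !inE.
case: (lost h x); case: (won h y) => /=; rewrite ?andbT; try lia.
Qed.

Definition Ls n (h : history n) := NW h :\: NL h.
Definition Ns n (h : history n) := NL h :&: NW h.
Definition Ws n (h : history n) := NL h :\: NW h.

Definition bad n (a : input n) (h : history n) : Prop :=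
  (forall x y, x \in Ls h -> y \in NL h -> a x < a y) /\
  (forall x y, x \in Ns h -> y \in Ws h -> a x < a y).

Lemma consistent_of_lw n (p : input n) h : wf h ->
  (forall t, t \in h -> p (loser t) < p (winner t)) -> consistent p h.
Proof.
move=> /allP W H; apply/allP => t th; have := H t th; have := W t th.
case: t th => [[i j] c] th; clear th; rewrite /loser /winner /answer /=.
case: c => /= ne lt; first by rewrite lt.
by rewrite ltnNge (ltnW lt).
Qed.

Lemma argmax_in n (a : input n) (S : {set 'I_n}) z0 : z0 \in S ->
  exists2 z, z \in S & forall w, w \in S -> a w <= a z.
Proof.
move=> z0S; case: (arg_maxnP (fun z => nat_of_ord (a z)) z0S) => z zS H.
by exists z.
Qed.

Lemma badify n (b : input n) h : wf h -> consistent b h ->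
  exists a, consistent a h /\ bad a h.
Proof.
move=> W C.
pose grp := fun z : 'I_n => if z \in Ls h then 0 else if z \in Ws h then 2 else 1.
pose key := fun z => grp z * n + b z.
have ik : injective key.
  move=> u v; rewrite /key => E; apply: (@perm_inj _ b); apply: val_inj => /=.
  have e1 : (grp u * n + b u) %% n = b u by rewrite modnMDl modn_small.
  have e2 : (grp v * n + b v) %% n = b v by rewrite modnMDl modn_small.
  by rewrite -e1 -e2 E.
have [p Hp] := perm_of_key ik.
exists p; split.
  apply: consistent_of_lw => // t th; rewrite Hp /key.
  have lw := consistent_lw W C th.
  have lo : loser t \notin NL h by rewrite inE negbK; apply/hasP; exists t.
  have wi : winner t \notin NW h by rewrite inE negbK; apply/hasP; exists t.
  have := ltn_ord (b (loser t)); have := ltn_ord (b (winner t)).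
  rewrite /grp /Ls /Ws !in_setD (negbTE lo) (negbTE wi) /=.
  case: (winner t \in NL h); case: (loser t \in NW h) => /=; nia.
split=> x y; rewrite !Hp /key /grp /Ls /Ws /Ns ?in_setD ?in_setI.
  have := ltn_ord (b x); have := ltn_ord (b y).
  move=> Hy Hx; case: (x \in NL h); case: (x \in NW h); case: (y \in NL h);
  by case: (y \in NW h) => //=; lia.
have := ltn_ord (b x); have := ltn_ord (b y).
move=> Hy Hx; case: (x \in NL h); case: (x \in NW h); case: (y \in NL h);
by case: (y \in NW h) => //=; lia.
Qed.

Lemma B1 n (a : input n) h x y : bad a h -> x \in NL h -> y \in NW h -> a x < a y ->
  x \in Ns h /\ y \in Ns h.
Proof.
move=> [b1 b2] xL yW lt; rewrite /Ns !in_setI xL yW /=.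
case xW : (x \in NW h); case yL : (y \in NL h) => //.
- have := b1 y x; rewrite /Ls in_setD yL yW => /(_ isT xL); lia.
- have := b2 y x; rewrite /Ns /Ws in_setI in_setD yL yW xL xW => /(_ isT isT); lia.
- have := b1 y x; rewrite /Ls in_setD yL yW => /(_ isT xL); lia.
Qed.

Lemma Ns_cons n (t : query n * bool) h : Ns (t :: h) = (Ns h :\ loser t) :\ winner t.
Proof.
apply/setP => z; rewrite /Ns NL_cons NW_cons !in_setI !in_setD1.
by rewrite in_setI; case: (z == loser t); case: (z == winner t); case: (z \in NL h); case: (z \in NW h).
Qed.

Lemma bad_stay n (a : input n) h (t : query n * bool) :
  bad a h -> loser t \notin Ns h -> winner t \notin Ns h -> bad a (t :: h).
Proof.
move=> [b1 b2] xN yN.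
have NE : Ns (t :: h) = Ns h.
  rewrite Ns_cons; apply/setP => z; rewrite !in_setD1.
  case: (z =P loser t) => [->|_] /=; first by rewrite (negbTE xN) andbF.
  case: (z =P winner t) => [->|_] /=; first by rewrite (negbTE yN).
  done.
have sL : forall z, z \in NL (t :: h) -> z \in NL h.
  by move=> z; rewrite NL_cons in_setD1 => /andP [].
have sW : forall z, z \in NW (t :: h) -> z \in NW h.
  by move=> z; rewrite NW_cons in_setD1 => /andP [].
have LL : forall z, z \in Ls (t :: h) -> z \in Ls h.
  move=> z; rewrite /Ls !in_setD => /andP [nl nw]; rewrite (sW _ nw) andbT.
  apply/negP => zl; move: nl; have : z \in Ns h by rewrite /Ns in_setI zl sW.
  by rewrite -NE /Ns in_setI => /andP [->].
have WW : forall z, z \in Ws (t :: h) -> z \in Ws h.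
  move=> z; rewrite /Ws !in_setD => /andP [nw nl]; rewrite (sL _ nl) andbT.
  apply/negP => zw; move: nw; have : z \in Ns h by rewrite /Ns in_setI zw sL.
  by rewrite -NE /Ns in_setI => /andP [_ ->].
split=> u v.
  by move=> /LL uL /sL vL; apply: b1.
by rewrite NE => uN /WW vW; apply: b2.
Qed.

Lemma theta_bound n (a : input n) h : bad a h ->
  exists th, CC a h th <= SS h - 1.
Proof.
move=> [b1 b2].
case: (set_0Vmem (NW h)) => [E|[z0 z0W]].
  exists 0; rewrite /CC E.
  have -> : [set y in set0 | 0 < a y] = set0 :> {set 'I_n} by apply/setP => y; rewrite !inE.
  have -> : [set x in NL h | a x < 0] = set0 by apply/setP => y; rewrite in_set in_set0 ltn0 andbF.
  by rewrite !cards0.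
have [z zW zmax] := argmax_in a z0W.
exists (a z); rewrite /CC.
have -> : [set y in NW h | a z < a y] = set0.
  apply/setP => y; rewrite in_set in_set0; case yW: (y \in NW h) => //=.
  by rewrite ltnNge zmax.
rewrite cards0 addn0.
case zN : (z \in NL h).
  have sub : [set x in NL h | a x < a z] \subset Ns h :\ z.
    apply/subsetP => x; rewrite in_set => /andP [xL lt].
    rewrite in_setD1 /Ns in_setI xL /=; apply/andP; split.
      by apply/negP => /eqP E; rewrite E ltnn in lt.
    case xW : (x \in NW h) => //.
    have := b2 z x; rewrite /Ns /Ws in_setI in_setD zN zW xW xL => /(_ isT isT).
    lia.
  have := subset_leq_card sub; rewrite /SS.
  have : z \in Ns h by rewrite /Ns in_setI zN zW.
  move=> zNs; rewrite (card_D1b (Ns h) z) zNs /Ns; lia.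
have sub : [set x in NL h | a x < a z] \subset set0.
  apply/subsetP => x; rewrite in_set => /andP [xL lt].
  have := b1 z x; rewrite /Ls in_setD zN zW => /(_ isT xL).
  lia.
by have := subset_leq_card sub; rewrite cards0; lia.
Qed.

Definition TT s c := maxn (s %/ 2) (s - 1 - c).

Lemma step_cards n (a : input n) (q : query n) h :
  let t := (q, answer a q) in
  #|NL h| = (loser t \in NL h) + #|NL (t :: h)| /\
  #|NW h| = (winner t \in NW h) + #|NW (t :: h)| /\
  SS h = (loser t \in Ns h) + ((winner t \in Ns h :\ loser t) + SS (t :: h)).
Proof.
move=> t; rewrite NL_cons NW_cons /SS -/(Ns (t :: h)) Ns_cons.
by rewrite -!card_D1b.
Qed.

Lemma Ns_NL n (h : history n) z : z \in Ns h -> z \in NL h.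
Proof. by rewrite /Ns in_setI => /andP []. Qed.
Lemma Ns_NW n (h : history n) z : z \in Ns h -> z \in NW h.
Proof. by rewrite /Ns in_setI => /andP []. Qed.

Lemma arith_stay m c U U' S (gx gy : bool) : (gx && gy) = false ->
  m.+1 + TT S c < U -> U <= U' + gx + gy -> m + TT S c < U'.
Proof. by case: gx; case: gy => //= _; rewrite /TT; lia. Qed.

Lemma arith_change m c U U' S S' (xN yN gx gy : bool) : xN || yN ->
  (xN -> gx) -> (yN -> gy) -> (gx -> gy -> xN && yN) ->
  S = xN + (yN + S') -> U <= U' + gx + gy ->
  m.+1 + TT S c.+1 < U -> m + TT S' c < U'.
Proof.
case: xN; case: yN; case: gx; case: gy => //= _ h1 h2 h3; rewrite /TT; lia.
Qed.

Lemma L1 n m : forall h (a : input n) c, wf h -> consistent a h -> bad a h -> 0 < c ->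
  m + TT (SS h) c < UU h -> ~ questioner_wins m h a c.
Proof.
elim: m => [|m IH] h a c W C B c0 lt.
  by move=> /= D; have := UU_det W C D; lia.
move=> /= [D|[q [ne H]]]; first by have := UU_det W C D; lia.
set t := (q, answer a q) in H.
have lw : a (loser t) < a (winner t) by apply: cons_lw; rewrite /= ?eqxx.
have W' : wf (t :: h) by apply: step_wf.
have C' : consistent a (t :: h) by apply: step_cons.
have [eA [eB eS]] := step_cards a q h; rewrite -/t in eA eB eS.
have g2 := B1 B (x := loser t) (y := winner t).
have xy : winner t != loser t by apply/eqP => E; rewrite E ltnn in lw.
rewrite in_setD1 xy /= in eS.
have xNL := @Ns_NL _ h (loser t); have yNW := @Ns_NW _ h (winner t).
have eU : UU h <= UU (t :: h) + (loser t \in NL h) + (winner t \in NW h).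
  by rewrite /UU eA eB; lia.
case E : ((loser t \in Ns h) || (winner t \in Ns h)).
  have [a' [Ca' Ba']] := badify W' C'.
  case: c c0 H lt => // c _ H lt.
  have H' := H a' c (or_intror (conj erefl Ca')).
  have lt' : m + TT (SS (t :: h)) c < UU (t :: h).
    apply: (arith_change E xNL yNW _ eS eU lt).
    by move=> p1 p2; have [-> ->] := g2 p1 p2 lw.
  case: c H H' lt lt' => [|c] H H' lt lt'.
    have [th Hth] := theta_bound Ba'.
    apply: (L0 (th := th) W' Ca' _ H').
    by move: lt'; rewrite /TT; lia.
  exact: (IH (t :: h) a' c.+1 W' Ca' Ba' isT lt' H').
have H' := H a c (or_introl (conj erefl erefl)).
move/negbT: E; rewrite negb_or => /andP [xN yN].
apply: (IH _ _ _ W' C' (bad_stay B xN yN) c0 _ H').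
have -> : SS (t :: h) = SS h by rewrite eS (negbTE xN) (negbTE yN).
apply: (arith_stay _ lt eU).
case gx : (loser t \in NL h); case gy : (winner t \in NW h) => //.
by have [] := g2 gx gy lw; rewrite (negbTE xN).
Qed.

Lemma NL_gt0 n (hn : 0 < n) (a : input n) h : wf h -> consistent a h -> 0 < #|NL h|.
Proof. by move=> W C; apply/card_gt0P; exists (tb hn a); apply: tb_NL. Qed.
Lemma NW_gt0 n (hn : 0 < n) (a : input n) h : wf h -> consistent a h -> 0 < #|NW h|.
Proof. by move=> W C; apply/card_gt0P; exists (bb hn a); apply: bb_NW. Qed.

Lemma UU0_det n (hn : 0 < n) (a : input n) h : wf h -> consistent a h -> UU h = 0 ->
  determined h.
Proof.
move=> W C U0; apply: (det_suff hn W C);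
  have := NL_gt0 hn W C; have := NW_gt0 hn W C; move: U0; rewrite /UU; lia.
Qed.

Lemma NL_sub n (t : query n * bool) h : #|NL (t :: h)| <= #|NL h|.
Proof. by rewrite NL_cons; apply/subset_leq_card/subD1set. Qed.
Lemma NW_sub n (t : query n * bool) h : #|NW (t :: h)| <= #|NW h|.
Proof. by rewrite NW_cons; apply/subset_leq_card/subD1set. Qed.

Lemma loser_mem n (q : query n) c (S : {set 'I_n}) :
  q.1 \in S -> q.2 \in S -> loser (q, c) \in S /\ winner (q, c) \in S.
Proof. by rewrite /loser /winner; case: c. Qed.

Lemma fallback n (hn : 0 < n) (a : input n) h : wf h -> consistent a h -> 0 < UU h ->
  exists q : query n, q.1 != q.2 /\ forall c, UU ((q, c) :: h) < UU h.
Proof.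
move=> W C U0; have l1 := NL_gt0 hn W C; have w1 := NW_gt0 hn W C.
case: (ltnP 1 #|NL h|) => [gt1|le1].
  have [x [y [xi yi ne]]] := card_gt1P gt1.
  exists (x, y); split => // c.
  have [li _] := loser_mem (q := (x, y)) c xi yi.
  have := NW_sub (x, y, c) h.
  have := card_D1b (NL h) (loser (x, y, c)); rewrite li.
  rewrite /UU NL_cons; move: w1 gt1; move: #|NL h :\ loser (x, y, c)| #|NL h| #|NW h| #|NW ((x, y, c) :: h)| => k1 k2 k3 k4. lia.
have gt1 : 1 < #|NW h| by move: U0; rewrite /UU; lia.
have [x [y [xi yi ne]]] := card_gt1P gt1.
exists (x, y); split => // c.
have [_ li] := loser_mem (q := (x, y)) c xi yi.
have := NL_sub (x, y, c) h.
have := card_D1b (NW h) (winner (x, y, c)); rewrite li.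
rewrite /UU NW_cons; move: l1 gt1; move: #|NW h :\ winner (x, y, c)| #|NL h| #|NW h| #|NL ((x, y, c) :: h)| => k1 k2 k3 k4; lia.
Qed.

Lemma adv_cons n (a a' : input n) c c' q h : consistent a h ->
  adv_move a c ((q, answer a q) :: h) a' c' ->
  consistent a' ((q, answer a q) :: h) /\ ((a' = a /\ c' = c) \/ c = c'.+1).
Proof.
move=> C [[-> ->]|[-> Ca']]; last by split=> //; right.
by split; [apply: step_cons | left].
Qed.

Lemma UA n (hn : 0 < n) m : forall h (a : input n) c, wf h -> consistent a h ->
  UU h <= m + minn (SS h %/ 2) m -> questioner_wins m h a c.
Proof.
elim: m => [|m IH] h a c W C lt.
  by apply: (UU0_det hn W C); lia.
case: (posnP (UU h)) => [U0|Upos]; first by left; apply: (UU0_det hn W C).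
right.
case: (ltnP 1 (SS h)) => [/card_gt1P [x [y [xi yi ne]]]|le1].
  exists (x, y); split => //=; move=> a' c' /(adv_cons C) [Ca' _].
  apply: IH => //; first exact: step_wf.
  have [eA [eB eS]] := step_cards a (x, y) h.
  have [li wi] := loser_mem (q := (x, y)) (answer a (x, y)) xi yi.
  have ne' : winner (x, y, answer a (x, y)) != loser (x, y, answer a (x, y)).
    by rewrite /winner /loser; case: (answer a (x, y)) => //=; rewrite eq_sym.
  rewrite li in_setD1 ne' wi /= in eS.
  rewrite (Ns_NL li) in eA; rewrite (Ns_NW wi) in eB.
  move: lt; rewrite /UU eA eB eS.
  move: #|NL ((x, y, answer a (x, y)) :: h)| #|NW ((x, y, answer a (x, y)) :: h)|
    (SS ((x, y, answer a (x, y)) :: h)) => k1 k2 k3; lia.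
have [q [ne Hq]] := fallback hn W C Upos.
exists q; split => //=; move=> a' c' /(adv_cons C) [Ca' _].
apply: IH => //; first exact: step_wf.
have := Hq (answer a q); move: lt; have : SS h %/ 2 = 0 by lia.
move=> ->; lia.
Qed.

Ltac gencards := repeat match goal with
  | |- context [#|?A|] => let k := fresh "k" in move: #|A| => k
  | |- context [SS ?A] => let k := fresh "k" in move: (SS A) => k
  end.

Definition ehead n (a : input n) (h : history n) : bool :=
  [exists u, (u \in Ls h) && [forall z, (z \in Ns h) ==> (a z < a u)]].
Definition PB n (a : input n) h c := (SS h + ehead a h) - 1 - c.

Lemma up_arith m U U' P P' : U <= m.+1 + minn P m.+1 -> U = U' + 2 -> P <= P' + 1 ->
  U' <= m + minn P' m.
Proof. lia. Qed.

Lemma UB_query n (hn : 0 < n) m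
  (IH : forall h (a : input n) c, wf h -> consistent a h ->
          UU h <= m + minn (PB a h c) m -> questioner_wins m h a c)
  h (a : input n) c x y : wf h -> consistent a h -> a x < a y ->
  x \in NL h -> y \in NW h ->
  SS h + ehead a h <= SS ((x, y, true) :: h) + 2 ->
  ehead a ((x, y, true) :: h) ->
  UU h <= m.+1 + minn (PB a h c) m.+1 -> questioner_wins m.+1 h a c.
Proof.
move=> W C lt xL yW eS eh U.
right; exists (x, y).
have ne : x != y by apply/eqP => E; rewrite E ltnn in lt.
have ans : answer a (x, y) = true by [].
split => //=; rewrite ans => a' c' Hm.
have W' : wf ((x, y, true) :: h) by rewrite /wf /= ne.
have C'a : consistent a ((x, y, true) :: h) by rewrite /consistent /= /answer /= lt.
have [Ca' Hc] : consistent a' ((x, y, true) :: h) /\ ((a' = a /\ c' = c) \/ c = c'.+1).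
  by case: Hm => [[-> ->]|[-> Ca']]; [split => //; left | split => //; right].
apply: IH => //.
have eA : #|NL h| = true + #|NL ((x, y, true) :: h)|.
  by rewrite NL_cons (card_D1b (NL h) x) xL.
have eB : #|NW h| = true + #|NW ((x, y, true) :: h)|.
  by rewrite NW_cons (card_D1b (NW h) y) yW.
have l1 := NL_gt0 hn W' C'a; have w1 := NW_gt0 hn W' C'a.
apply: (up_arith U).
  rewrite /UU eA eB; move: l1 w1; gencards; lia.
case: Hc => [[-> ->]|->]; rewrite /PB.
  by rewrite eh; move: eS; gencards; lia.
by move: eS; case: (ehead a' _); case: (ehead a _); gencards; lia.
Qed.

Lemma SS_step n (t : query n * bool) h :
  SS h <= SS (t :: h) + (loser t \in Ns h) + (winner t \in Ns h).
Proof.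
rewrite /SS -/(Ns h) -/(Ns (t :: h)) Ns_cons.
rewrite (card_D1b (Ns h) (loser t)) (card_D1b (Ns h :\ loser t) (winner t)) in_setD1.
by case: (winner t \in Ns h); rewrite ?andbF; gencards; lia.
Qed.

Lemma ehead_after n (a : input n) h x y : x \in NW h -> x != y ->
  (forall w, w \in Ns h -> w != x -> w != y -> a w < a x) ->
  ehead a ((x, y, true) :: h).
Proof.
move=> xW xy Hw; apply/existsP; exists x; apply/andP; split.
  by rewrite /Ls in_setD NL_cons NW_cons !in_setD1 /loser /winner /= eqxx xy xW.
apply/forallP => w; apply/implyP; rewrite Ns_cons !in_setD1 /loser /winner /=.
by case/and3P => wy wx wN; apply: Hw.
Qed.

Lemma lt_of_le_ne n (a : input n) w z : a w <= a z -> w != z -> a w < a z.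
Proof.
rewrite leq_eqVlt => /orP [/eqP E|//] ne.
by move/val_inj/perm_inj: E => E; rewrite E eqxx in ne.
Qed.

Lemma UB n (hn : 0 < n) m : forall h (a : input n) c, wf h -> consistent a h ->
  UU h <= m + minn (PB a h c) m -> questioner_wins m h a c.
Proof.
elim: m => [|m IH] h a c W C lt.
  by apply: (UU0_det hn W C); lia.
case: (posnP (UU h)) => [U0|Upos]; first by left; apply: (UU0_det hn W C).
case: (posnP (PB a h c)) => [P0|Ppos].
  right; have [q [ne Hq]] := fallback hn W C Upos.
  exists q; split => //=; move=> a' c' /(adv_cons C) [Ca' _].
  apply: IH => //; first exact: step_wf.
  by have := Hq (answer a q); move: lt; rewrite P0; lia.
case eh : (ehead a h).
  have [u /andP [uL /forallP Hu]] := existsP eh.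
  have : 0 < SS h by move: Ppos; rewrite /PB eh; lia.
  rewrite /SS -/(Ns h) => /card_gt0P [z0 z0N].
  have [z zN zmax] := argmax_in a z0N.
  move: uL; rewrite /Ls in_setD => /andP [uNL uW].
  have zu : z != u by apply/eqP => E; move: (Ns_NL zN); rewrite E (negbTE uNL).
  have lzu : a z < a u by have := Hu z; rewrite zN.
  apply: (UB_query hn IH W C lzu (Ns_NL zN) uW _ _ lt).
    have := SS_step (z, u, true) h; rewrite /loser /winner /= zN.
    have -> : (u \in Ns h) = false by rewrite /Ns in_setI (negbTE uNL).
    by rewrite eh; gencards; lia.
  apply: ehead_after => //; first exact: Ns_NW.
  by move=> w wN wz _; apply: lt_of_le_ne => //; apply: zmax.
have : 1 < SS h by move: Ppos; rewrite /PB eh; lia.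
rewrite /SS -/(Ns h) => S2.
have [y0 y0N] : exists y0, y0 \in Ns h by apply/card_gt0P; lia.
have [y yN ymax] := argmax_in a y0N.
have : 0 < #|Ns h :\ y| by move: S2; rewrite (card_D1b (Ns h) y) yN; lia.
move=> /card_gt0P [x0 x0N].
have [x xN xmax] := argmax_in a x0N.
move: xN; rewrite in_setD1 => /andP [xy xN].
have lxy : a x < a y by apply: lt_of_le_ne => //; apply: ymax.
apply: (UB_query hn IH W C lxy (Ns_NL xN) (Ns_NW yN) _ _ lt).
  have := SS_step (x, y, true) h; rewrite /loser /winner /= xN yN eh.
  by rewrite /SS; gencards; lia.
apply: ehead_after => //; first exact: Ns_NW.
move=> w wN wx wy; apply: lt_of_le_ne => //; apply: xmax.
by rewrite in_setD1 wy.
Qed.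

Lemma NL_nil n : NL ([::] : history n) = setT.
Proof. by apply/setP => z; rewrite !inE. Qed.
Lemma NW_nil n : NW ([::] : history n) = setT.
Proof. by apply/setP => z; rewrite !inE. Qed.
Lemma UU_nil n : UU ([::] : history n) = 2 * n - 2.
Proof. by rewrite /UU NL_nil NW_nil cardsT card_ord; lia. Qed.
Lemma SS_nil n : SS ([::] : history n) = n.
Proof. by rewrite /SS NL_nil NW_nil setIid cardsT card_ord. Qed.
Lemma Ls_nil n : Ls ([::] : history n) = set0.
Proof. by rewrite /Ls NL_nil NW_nil setDv. Qed.
Lemma Ws_nil n : Ws ([::] : history n) = set0.
Proof. by rewrite /Ws NL_nil NW_nil setDv. Qed.
Lemma ehead_nil n (a : input n) : ehead a [::] = false.
Proof.
apply/negbTE/existsP => [[u /andP [uL _]]]; by rewrite Ls_nil in_set0 in uL.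
Qed.

Theorem theorem1 (n k : nat) (hn : (0 < n)%N) :
  D_value k n (minn (n + k - 1) ((3 * n).+1 %/ 2 - 2)).
Proof.
split.
  move=> a.
  case: (leqP (n + k - 1) ((3 * n).+1 %/ 2 - 2)) => cmp.
    apply: (UB hn) => //; rewrite UU_nil /PB SS_nil ehead_nil; lia.
  apply: (UA hn) => //; rewrite UU_nil SS_nil; lia.
move=> m Hm; rewrite leqNgt; apply/negP => lt.
have W : wf ([::] : history n) by [].
have C : consistent (1%g : input n) [::] by [].
case: k Hm lt => [|k] Hm lt.
  apply: (L0 (th := 0) W C _ (Hm 1%g)).
  rewrite UU_nil /CC.
  have -> : [set x in NL ([::] : history n) | (1%g : input n) x < 0] = set0.
    by apply/setP => x; rewrite in_set in_set0 ltn0 andbF.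
  have : #|[set y in NW ([::] : history n) | 0 < (1%g : input n) y]| <= n - 1.
    have sub : [set y in NW ([::] : history n) | 0 < (1%g : input n) y] \subset
               [set: 'I_n] :\ Ordinal hn.
      apply/subsetP => y; rewrite in_set in_setD1 in_setT perm1 andbT => /andP [_ yp].
      by apply/eqP => E; rewrite E in yp.
    have := subset_leq_card sub; have := card_D1b [set: 'I_n] (Ordinal hn).
    by rewrite in_setT cardsT card_ord; gencards; lia.
  by rewrite cards0; gencards; lia.
have B : bad (1%g : input n) [::].
  by split => x y; rewrite ?Ls_nil ?Ws_nil in_set0 // andbF.
apply: (L1 W C B _ _ (Hm 1%g)) => //.
rewrite UU_nil SS_nil /TT; lia.
Qed.
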